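(* Let $N$ be finite, $\mathbf P$ stochastic on $N$, $0<\beta<1$, $\mathbf R\in\mathbb R^N$ and $S\subseteq N$. For every $i\in N$ and every $j\in S^c$, $$\nu_i^{S\cup\{j\}}=\nu_j^S-\frac{w_i^S}{w_i^{S\cup\{j\}}}\big(\nu_j^S-\nu_i^S\big).$$
   Context: $N$ is a finite state set, $\mathbf{P}=(p_{ij})$ stochastic, $\beta\in(0,1)$, $\mathbf R=(R_j)$; $X(t)$ the Markov chain with matrix $\mathbf P$, $\mathsf E_i$ expectation given $X(0)=i$, $S^c=N\setminus S$. For $S\subseteq N$, $\tau_S=\min\{t\ge0:X(t)\notin S\}$, $f_i^S=\mathsf{E}_i[\sum_{t=0}^{\tau_S-1}R_{X(t)}\beta^t]$, $g_i^S=\mathsf{E}_i[\sum_{t=0}^{\tau_S-1}\beta^t]$, $w_i^S=1+\beta\sum_jp_{ij}g_j^S-\beta g_i^S$ (positive), $r_i^S=R_i+\beta\sum_jp_{ij}f_j^S-\beta f_i^S$, $\nu_i^S=r_i^S/w_i^S$. *)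

(* Defs.v *)
From mathcomp Require Import all_boot all_order all_algebra.
From mathcomp Require Import all_classical all_reals all_analysis.
Set Implicit Arguments. Unset Strict Implicit. Unset Printing Implicit Defensive.
Import Order.TTheory GRing.Theory Num.Theory.
Local Open Scope ring_scope.

Section MC.
Variables (R : realType) (N : finType).

Definition stochastic (P : N -> N -> R) : Prop :=
  (forall i j, 0 <= P i j) /\ (forall i, \sum_(j : N) P i j = 1).

(* stay_prob P S t i j = P_i( X(0),...,X(t) all in S and X(t) = j )
   = P_i( tau_S > t, X(t) = j ). *)
Fixpoint stay_prob (P : N -> N -> R) (S : {set N}) (t : nat) (i j : N) : R :=
  match t with
  | 0%N => if (i \in S) && (j == i) then 1 else 0
  | t'.+1 => if j \in S then \sum_(k : N) stay_prob P S t' i k * P k j else 0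
  end.

(* E_i[ sum_{t=0}^{tau_S - 1} c(X(t)) beta^t ]
   = sum_{t>=0} beta^t E_i[ c(X(t)) 1{tau_S > t} ]. *)
Definition disc_exp (P : N -> N -> R) (beta : R) (c : N -> R) (S : {set N}) (i : N) : R :=
  limn (fun n => \sum_(0 <= t < n) beta ^+ t * \sum_(j : N) stay_prob P S t i j * c j).

Definition f_ (P : N -> N -> R) beta (Rw : N -> R) S i := disc_exp P beta Rw S i.
Definition g_ (P : N -> N -> R) beta S i := disc_exp P beta (fun _ => 1) S i.

Definition w_ (P : N -> N -> R) beta S i :=
  1 + beta * \sum_(j : N) P i j * g_ P beta S j - beta * g_ P beta S i.
Definition r_ (P : N -> N -> R) beta Rw S i :=
  Rw i + beta * \sum_(j : N) P i j * f_ P beta Rw S j - beta * f_ P beta Rw S i.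
Definition nu_ (P : N -> N -> R) beta Rw S i :=
  r_ P beta Rw S i / w_ P beta S i.
End MC.

(* Main.v *)
Require Import Defs.
From mathcomp Require Import all_boot all_order all_algebra.
From mathcomp Require Import all_classical all_reals all_analysis.
From mathcomp Require Import ring lra.
Import Order.TTheory GRing.Theory Num.Theory.
Import numFieldNormedType.Exports.
Local Open Scope classical_set_scope.
Local Open Scope ring_scope.

Section Aux.
Variables (R : realType) (N : finType) (P : N -> N -> R) (beta : R).
Hypothesis (HP : stochastic P) (b0 : 0 < beta) (b1 : beta < 1).

Lemma stay_ge0 S t i j : 0 <= stay_prob P S t i j.
Proof.
case: HP => P0 _.
elim: t j => [|t IH] j /=; first by case: ifP.
case: ifP => // _; apply: sumr_ge0 => k _; apply: mulr_ge0 => //.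
Qed.

Lemma stay_fwd S t i j : stay_prob P S t.+1 i j =
  if j \in S then \sum_k stay_prob P S t i k * P k j else 0.
Proof. by []. Qed.

Lemma stay_back S t i j : stay_prob P S t.+1 i j =
  if i \in S then \sum_l P i l * stay_prob P S t l j else 0.
Proof.
elim: t i j => [|t IH] i j.
  rewrite /=. case: (boolP (i \in S)) => iS; case: (boolP (j \in S)) => jS //=.
  - rewrite (bigD1 i) //= eqxx mul1r big1 ?addr0; last first.
      by move=> k /negPf ->; rewrite mul0r.
    rewrite (bigD1 j) //= jS eqxx mulr1 big1 ?addr0 //.
    by move=> k /negPf kn; rewrite eq_sym kn andbF mulr0.
  - rewrite big1 // => k _; case: ifP; rewrite ?mulr0 //.
    by case/andP => kS /eqP jk; move: jS; rewrite jk kS.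
  - by rewrite big1 // => k _; rewrite mul0r.
rewrite stay_fwd.
case: (boolP (j \in S)) => jS.
  under eq_bigr => k _ do rewrite IH.
  case: (boolP (i \in S)) => iS; last by rewrite big1 // => k _; rewrite mul0r.
  under eq_bigr => k _ do rewrite mulr_suml.
  rewrite exchange_big /=; apply: eq_bigr => l _ /=.
  rewrite jS mulr_sumr; apply: eq_bigr => k _; by rewrite mulrA.
case: ifP => // _; rewrite big1 // => l _.
by rewrite /= (negPf jS) mulr0.
Qed.

Lemma stay_le1 S t i j : stay_prob P S t i j <= 1.
Proof.
case: HP => P0 P1.
elim: t i j => [|t IH] i j; first by rewrite /=; case: ifP.
rewrite stay_back; case: ifP => // _.
rewrite -(P1 i); apply: ler_sum => l _.
by rewrite -[leRHS]mulr1; apply: ler_wpM2l.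
Qed.

Lemma geo n : \sum_(0 <= t < n) beta ^+ t <= (1 - beta)^-1.
Proof.
have H : (\sum_(0 <= t < n) beta ^+ t) * (1 - beta) = 1 - beta ^+ n.
  elim: n => [|n IH]; first by rewrite big_geq // mul0r expr0 subrr.
  by rewrite big_nat_recr //= mulrDl IH exprS; ring.
rewrite -div1r ler_pdivlMr ?subr_gt0 // H.
have := exprn_ge0 n (ltW b0); lra.
Qed.

Definition G S n i j := \sum_(0 <= t < n) beta ^+ t * stay_prob P S t i j.
Definition Gl S i j := limn (fun n => G S n i j).

Lemma G_nd S i j : nondecreasing_seq (fun n => G S n i j).
Proof.
apply/nondecreasing_seqP => n; rewrite /G big_nat_recr //= lerDl.
by apply: mulr_ge0; [apply: exprn_ge0; apply: ltW|apply: stay_ge0].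
Qed.

Lemma G_cvg S i j : (fun n => G S n i j) @ \oo --> Gl S i j.
Proof.
have H := nondecreasing_cvgn (G_nd S i j).
have ub : has_ubound (range (fun n => G S n i j)). exists (1 - beta)^-1 => _ [n _ <-].
  apply: le_trans (geo n); rewrite /G; apply: ler_sum => t _.
  rewrite -[leRHS]mulr1; apply: ler_wpM2l; first by apply: exprn_ge0; apply: ltW.
  exact: stay_le1.
by apply/cvg_ex; eexists; exact (H ub).
Qed.

Lemma Gl_ge0 S i j : 0 <= Gl S i j.
Proof.
apply: le_trans (nondecreasing_cvgn_le (G_nd S i j) _ 0%N).
  by rewrite /G big_geq.
exact: cvgP (G_cvg S i j).
Qed.

Lemma cvg_fsum (F : N -> nat -> R) (L : N -> R) :
  (forall k, (fun n => F k n) @ \oo --> (L k : R)) -> (fun n => \sum_k F k n) @ \oo --> \sum_k L k.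
Proof.
move=> HF; elim: (index_enum N) => [|a r IH].
  rewrite big_nil; under eq_fun do rewrite big_nil; exact: cvg_cst.
rewrite big_cons; under eq_fun do rewrite big_cons.
exact: cvgD.
Qed.

Lemma G_rec S n i j : G S n.+1 i j =
  (if (i \in S) && (j == i) then 1 else 0) +
  beta * (if i \in S then \sum_l P i l * G S n l j else 0).
Proof.
rewrite /G big_nat_recl // expr0 mul1r; congr (_ + _).
under eq_bigr => t _ do rewrite stay_back.
case: (i \in S); last by rewrite mulr0 big1 // => t _; rewrite mulr0.
transitivity (\sum_(0 <= t < n) \sum_l beta * (P i l * (beta ^+ t * stay_prob P S t l j))).
  by apply: eq_bigr => t _; rewrite !mulr_sumr; apply: eq_bigr => l _; rewrite exprS; ring.
rewrite exchange_big mulr_sumr /=; apply: eq_bigr => l _.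
by rewrite !mulr_sumr.
Qed.

Lemma Gl_eq S i j : Gl S i j =
  (if (i \in S) && (j == i) then 1 else 0) +
  beta * (if i \in S then \sum_l P i l * Gl S l j else 0).
Proof.
have h1 : (fun n => G S n.+1 i j) @ \oo --> Gl S i j.
  by move: (G_cvg S i j); rewrite -cvg_shiftS.
have h2 : (fun n => G S n.+1 i j) @ \oo -->
  (if (i \in S) && (j == i) then 1 else 0) +
  beta * (if i \in S then \sum_l P i l * Gl S l j else 0).
  under eq_fun do rewrite G_rec.
  apply: cvgD; first exact: cvg_cst.
  apply: cvgMr; case: ifP => _; last exact: cvg_cst.
  apply: cvg_fsum => l; apply: cvgMr; exact: G_cvg.
exact: (cvg_unique _ h1 h2).
Qed.

Lemma disc_sum c S i : disc_exp P beta c S i = \sum_j c j * Gl S i j.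
Proof.
rewrite /disc_exp.
have e : forall n, \sum_(0 <= t < n) beta ^+ t * \sum_j stay_prob P S t i j * c j
   = \sum_j c j * G S n i j.
  move=> n; rewrite /G.
  under eq_bigr do rewrite mulr_sumr.
  rewrite exchange_big; apply: eq_bigr => j _ /=; rewrite mulr_sumr.
  by apply: eq_bigr => t _; ring.
under eq_fun do rewrite e.
apply: cvg_lim => //.
apply: cvg_fsum => j; apply: cvgMr; exact: G_cvg.
Qed.

Lemma disc_eq c S k : disc_exp P beta c S k =
  if k \in S then c k + beta * \sum_l P k l * disc_exp P beta c S l else 0.
Proof.
rewrite disc_sum; under eq_bigr => j _ do rewrite Gl_eq.
case: (boolP (k \in S)) => kS /=.
  under eq_bigr => j _ do rewrite mulrDr.
  rewrite big_split /=; congr (_ + _).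
    rewrite (bigD1 k) //= eqxx mulr1 big1 ?addr0 // => j /negPf ->.
    by rewrite mulr0.
  transitivity (\sum_j \sum_l beta * (P k l * (c j * Gl S l j))).
    by apply: eq_bigr => j _; rewrite !mulr_sumr; apply: eq_bigr => l _; ring.
  rewrite exchange_big mulr_sumr; apply: eq_bigr => l _ /=.
  by rewrite disc_sum !mulr_sumr.
by rewrite big1 // => j _; rewrite mulr0 addr0 mulr0.
Qed.

Lemma hom_zero (S : {set N}) (d : N -> R) :
  (forall k, d k = if k \in S then beta * \sum_l P k l * d l else 0) ->
  forall k, d k = 0.
Proof.
case: HP => P0 P1 Hd k.
case: (@arg_maxP _ R N k (fun _ => true) (fun k => `|d k|) isT) => m _ Hm.
suff H : `|d m| <= 0.
  by apply/eqP; rewrite -normr_le0; exact: le_trans (Hm k isT) H.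
have H : `|d m| <= beta * `|d m|.
  rewrite {1}Hd; case: ifP => _; last by rewrite normr0 mulr_ge0 // ltW.
  rewrite normrM (ger0_norm (ltW b0)); apply: ler_wpM2l; first exact: ltW.
  apply: le_trans (ler_norm_sum _ _ _) _.
  apply: le_trans (_ : \sum_l P m l * `|d m| <= _).
    apply: ler_sum => l _; rewrite normrM ger0_norm //; apply: ler_wpM2l => //.
    exact: Hm.
  by rewrite -mulr_suml P1 mul1r.
have H2 : (1 - beta) * `|d m| <= 0 by rewrite mulrBl mul1r subr_le0.
by rewrite pmulr_rle0 ?subr_gt0 in H2.
Qed.

Lemma disc_in c (T : {set N}) k : k \in T ->
  disc_exp P beta c T k = c k + beta * \sum_l P k l * disc_exp P beta c T l.
Proof. by move=> kT; rewrite disc_eq kT. Qed.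

Lemma disc0 c (T : {set N}) k : k \notin T -> disc_exp P beta c T k = 0.
Proof. by move=> kT; rewrite disc_eq (negPf kT). Qed.

Lemma sumPD (x y : N -> R) k :
  \sum_l P k l * (x l - y l) = \sum_l P k l * x l - \sum_l P k l * y l.
Proof. by rewrite -sumrB; apply: eq_bigr => l _; rewrite mulrBr. Qed.

Lemma sum_lin (a b : R) (x y : N -> R) k :
  \sum_l P k l * (a * x l - b * y l) =
  a * (\sum_l P k l * x l) - b * (\sum_l P k l * y l).
Proof.
rewrite !mulr_sumr -sumrB; apply: eq_bigr => l _; ring.
Qed.

Lemma discD c (T1 T2 : {set N}) k : k \in T1 -> k \in T2 ->
  disc_exp P beta c T2 k - disc_exp P beta c T1 k =
  beta * \sum_l P k l * (disc_exp P beta c T2 l - disc_exp P beta c T1 l).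
Proof.
move=> k1 k2; rewrite (disc_in _ _ _ k1) (disc_in _ _ _ k2) sumPD; ring.
Qed.

Lemma g_ge0 T k : 0 <= disc_exp P beta (fun _ => 1) T k.
Proof.
rewrite disc_sum; apply: sumr_ge0 => l _; rewrite mul1r; exact: Gl_ge0.
Qed.

Lemma sumg_ge0 T k : 0 <= \sum_l P k l * disc_exp P beta (fun _ => 1) T l.
Proof.
case: HP => P0 _; apply: sumr_ge0 => l _; apply: mulr_ge0 => //; exact: g_ge0.
Qed.

Lemma wpos (T : {set N}) k : 0 < 1 + beta * \sum_l P k l * disc_exp P beta (fun _ => 1) T l
   - beta * disc_exp P beta (fun _ => 1) T k.
Proof.
have s0 := sumg_ge0 T k.
move: s0; set s := \sum_l _ => s0.
have h1 : 0 <= beta * s := mulr_ge0 (ltW b0) s0.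
have h3 : 0 < 1 + beta * s by apply: lt_le_trans (ltr01) _; rewrite lerDl.
case: (boolP (k \in T)) => kT.
  rewrite [X in _ - beta * X](disc_in _ _ _ kT) -/s.
  have -> : 1 + beta * s - beta * (1 + beta * s) = (1 - beta) * (1 + beta * s) by ring.
  by apply: mulr_gt0; rewrite // subr_gt0.
by rewrite disc0 // mulr0 subr0.
Qed.

Definition wexp (H : N -> R) k := 1 + beta * \sum_l P k l * H l - beta * H k.
Definition rexp (Rw : N -> R) (H : N -> R) k := Rw k + beta * \sum_l P k l * H l - beta * H k.

Lemma final_alg (Rw F' F G' G : N -> R) i j :
  (forall k, G' j * (F' k - F k) = F' j * (G' k - G k)) ->
  F j = 0 -> G j = 0 ->
  F' j = Rw j + beta * \sum_l P j l * F' l ->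
  G' j = 1 + beta * \sum_l P j l * G' l ->
  0 < G' j ->
  0 < wexp G' i -> 0 < wexp G i -> 0 < wexp G j ->
  rexp Rw F' i / wexp G' i =
  rexp Rw F j / wexp G j - wexp G i / wexp G' i * (rexp Rw F j / wexp G j - rexp Rw F i / wexp G i).
Proof.
move=> D F0 G0 EF EG Gp wi' wi wj.
have Sm k : G' j * (\sum_l P k l * F' l - \sum_l P k l * F l) =
            F' j * (\sum_l P k l * G' l - \sum_l P k l * G l).
  by rewrite -!sumPD !mulr_sumr; apply: eq_bigr => l _; rewrite mulrCA D mulrCA.
have X : F' j * wexp G j = rexp Rw F j * G' j.
  rewrite /wexp /rexp F0 G0 !mulr0 !subr0.
  move: (Sm j); rewrite EF EG.
  set A' := \sum_l P j l * F' l; set A := \sum_l P j l * F l.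
  set B' := \sum_l P j l * G' l; set B := \sum_l P j l * G l => H.
  apply/eqP; rewrite -subr_eq0; apply/eqP.
  transitivity (beta * ((1 + beta * B') * (A' - A) - (Rw j + beta * A') * (B' - B))).
    ring.
  by rewrite H subrr mulr0.
have Kr : G' j * (rexp Rw F' i - rexp Rw F i) = F' j * (wexp G' i - wexp G i).
  have -> : rexp Rw F' i - rexp Rw F i =
     beta * (\sum_l P i l * F' l - \sum_l P i l * F l) - beta * (F' i - F i).
    by rewrite /rexp; ring.
  have -> : wexp G' i - wexp G i =
     beta * (\sum_l P i l * G' l - \sum_l P i l * G l) - beta * (G' i - G i).
    by rewrite /wexp; ring.
  rewrite mulrBr (mulrCA (G' j) beta) (mulrCA (G' j) beta) Sm D.
  ring.
have key : wexp G j * (rexp Rw F' i - rexp Rw F i) = rexp Rw F j * (wexp G' i - wexp G i).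
  apply: (mulfI (lt0r_neq0 Gp)).
  transitivity (wexp G j * (G' j * (rexp Rw F' i - rexp Rw F i))); first ring.
  rewrite Kr.
  transitivity ((F' j * wexp G j) * (wexp G' i - wexp G i)); first ring.
  rewrite X; ring.
apply/eqP; rewrite -subr_eq0; apply/eqP.
have n1 := lt0r_neq0 wi'; have n2 := lt0r_neq0 wi; have n3 := lt0r_neq0 wj.
transitivity ((wexp G j * (rexp Rw F' i - rexp Rw F i) - rexp Rw F j * (wexp G' i - wexp G i))
   / (wexp G' i * wexp G j)).
  by field; rewrite n1 n2 n3.
by rewrite key subrr mul0r.
Qed.

Section Main.
Variables (Rw : N -> R) (S : {set N}) (j : N).
Hypothesis jS : j \notin S.
Local Notation F' := (disc_exp P beta Rw (j |: S)).
Local Notation F := (disc_exp P beta Rw S).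
Local Notation G' := (disc_exp P beta (fun _ => 1) (j |: S)).
Local Notation G := (disc_exp P beta (fun _ => 1) S).

Lemma Dlem k : G' j * (F' k - F k) = F' j * (G' k - G k).
Proof.
apply/eqP; rewrite -subr_eq0; apply/eqP.
apply: (hom_zero S (fun k => G' j * (F' k - F k) - F' j * (G' k - G k))) => {}k /=.
case: (boolP (k \in S)) => kS.
  have kS' : k \in j |: S by rewrite in_setU1 kS orbT.
  rewrite (discD _ _ _ _ kS kS') (discD _ _ _ _ kS kS').
  rewrite (sum_lin (G' j) (F' j) (fun l => F' l - F l) (fun l => G' l - G l)) /=; ring.
case: (eqVneq k j) => [->|kj].
  by rewrite (disc0 _ _ _ jS) (disc0 _ _ _ jS) !subr0 mulrC subrr.
have kS' : k \notin j |: S by rewrite in_setU1 (negPf kj) (negPf kS).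
by rewrite !(disc0 _ _ _ kS') !(disc0 _ _ _ kS) !subrr !mulr0 subrr.
Qed.

Lemma main_aux i :
  nu_ P beta Rw (j |: S) i =
    nu_ P beta Rw S j
    - w_ P beta S i / w_ P beta (j |: S) i * (nu_ P beta Rw S j - nu_ P beta Rw S i).
Proof.
have jS' : j \in j |: S by rewrite in_setU1 eqxx.
have Gp : 0 < G' j.
  rewrite (disc_in _ _ _ jS').
  have := sumg_ge0 (j |: S) j; set s := \sum_l _ => s0.
  have h1 : 0 <= beta * s := mulr_ge0 (ltW b0) s0.
  by apply: lt_le_trans (ltr01) _; rewrite lerDl.
exact: (@final_alg Rw F' F G' G i j Dlem (disc0 _ _ _ jS) (disc0 _ _ _ jS)
  (disc_in _ _ _ jS') (disc_in _ _ _ jS') Gp (wpos _ _) (wpos _ _) (wpos _ _)).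
Qed.
End Main.
End Aux.

Theorem proposition5 (R : realType) (N : finType) (P : N -> N -> R) (beta : R)
  (Rw : N -> R) (S : {set N}) :
  stochastic P -> 0 < beta -> beta < 1 ->
  forall i j : N, j \notin S ->
  nu_ P beta Rw (j |: S) i =
    nu_ P beta Rw S j
    - w_ P beta S i / w_ P beta (j |: S) i * (nu_ P beta Rw S j - nu_ P beta Rw S i).
Proof.
move=> HP b0 b1 i j jS.
exact: (@main_aux R N P beta HP b0 b1 Rw S j jS i).
Qed.
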